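(* Let $X$ be a topological space. If $1\in\mathrm{MG}(X)$, then $X$ is metrizable (i.e. $\mathrm{Met}(X;\mathbb{R})\ne\emptyset$).
   Context: A linearly ordered Abelian group is an Abelian group with a linear order compatible with addition. For $x,y\in G_{>0}$, $x\asymp y$ iff $y\le nx$ and $x\le my$ for some $n,m\in\mathbb{Z}_{\ge1}$; $\mathrm{Arc}(G)=G_{>0}/\asymp$ (linearly ordered by $[x]\preceq[y]$ iff ($nx<y$ for all $n$) or $x\asymp y$), and $\mathrm{Arc}(G)^\perp$ is $\mathrm{Arc}(G)$ with a new least element adjoined. For a bottomed linearly ordered set $S$ with least element $\perp_S$, $S^*=S\setminus\{\perp_S\}$, the character $\chi(S)$ is the least cardinal $\kappa>0$ such that some strictly decreasing family $(s_\alpha)_{\alpha<\kappa}$ in $S^*$ has every $t\in S^*$ bounded below by some $s_\alpha$. A $G$-metric on $X$ is $d\colon X^2\to G$ with $d(x,y)=0\iff x=y$, $d\ge0$, symmetric, triangle inequality, topology via open balls of radii in $G_{>0}$; $\mathrm{Met}(X;G)$ is the set of $G$-metrics generating the topology of $X$. A cardinal $\kappa$ is in $\mathrm{MG}(X)$ iff some linearly ordered Abelian group $G$ with $\chi(\mathrm{Arc}(G)^\perp)=\kappa$ has $\mathrm{Met}(X;G)\ne\emptyset$. *)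

(* Defs.v *)
From HB Require Import structures.
From mathcomp Require Import all_boot all_order all_algebra.
From mathcomp Require Import classical_sets reals topology.

Set Implicit Arguments.
Unset Strict Implicit.
Unset Printing Implicit Defensive.

Import Order.TTheory GRing.Theory Num.Theory.
Local Open Scope ring_scope.
Local Open Scope classical_set_scope.

Definition LOAG (G : zmodType) (le : G -> G -> Prop) : Prop :=
  [/\ (forall x, le x x),
      (forall x y, le x y -> le y x -> x = y),
      (forall x y z, le x y -> le y z -> le x z),
      (forall x y, le x y \/ le y x)
    & (forall x y z, le x y -> le (x + z) (y + z))].

Definition glt (G : zmodType) (le : G -> G -> Prop) (x y : G) : Prop :=
  le x y /\ x <> y.

Definition arch_eq (G : zmodType) (le : G -> G -> Prop) (x y : G) : Prop :=
  exists n m : nat, (0 < n)%N /\ (0 < m)%N /\ le y (x *+ n) /\ le x (y *+ m).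

Definition arch_class (G : zmodType) (le : G -> G -> Prop) (x : G) : set G :=
  [set y | glt le 0 y /\ arch_eq le x y].

(* Arc(G) = G_{>0} / ~ , its elements being the equivalence classes. *)
Definition Arc (G : zmodType) (le : G -> G -> Prop) : Type :=
  {A : set G | exists x, glt le 0 x /\ A = arch_class le x}.

Definition arc_le (G : zmodType) (le : G -> G -> Prop) (A B : Arc le) : Prop :=
  exists x y, proj1_sig A x /\ proj1_sig B y /\
    ((forall n : nat, (0 < n)%N -> glt le (x *+ n) y) \/ arch_eq le x y).

(* Arc(G)^perp : Arc(G) with a new least element (None) adjoined. *)
Definition ArcBot (G : zmodType) (le : G -> G -> Prop) : Type := option (Arc le).

Definition arcbot_le (G : zmodType) (le : G -> G -> Prop)
    (a b : ArcBot le) : Prop :=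
  match a, b with
  | None, _ => True
  | Some _, None => False
  | Some A, Some B => arc_le A B
  end.

Definition char_family (S : Type) (le : S -> S -> Prop) (bot : S) (k : nat)
  : Prop :=
  exists s : 'I_k -> S,
    (forall a, s a <> bot) /\
    (forall a b : 'I_k, (a < b)%N -> le (s b) (s a) /\ s b <> s a) /\
    (forall t, t <> bot -> exists a, le (s a) t).

(* chi(S) = k for a finite cardinal k: k is the least cardinal > 0 admitting
   such a family.  (Any cardinal smaller than a finite one is finite, so only
   finite cardinals need to be compared.) *)
Definition char_eq_nat (S : Type) (le : S -> S -> Prop) (bot : S) (k : nat)
  : Prop :=
  [/\ (0 < k)%N, char_family le bot k
    & forall m : nat, (0 < m)%N -> (m < k)%N -> ~ char_family le bot m].

Definition is_Gmetric (X : Type) (G : zmodType) (le : G -> G -> Prop)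
    (d : X -> X -> G) : Prop :=
  [/\ (forall x y, d x y = 0 <-> x = y),
      (forall x y, le 0 (d x y)),
      (forall x y, d x y = d y x)
    & (forall x y z, le (d x z) (d x y + d y z))].

Definition Gball (X : Type) (G : zmodType) (le : G -> G -> Prop)
    (d : X -> X -> G) (x : X) (r : G) : set X :=
  [set y | glt le (d x y) r].

Definition Met (X : topologicalType) (G : zmodType) (le : G -> G -> Prop)
    (d : X -> X -> G) : Prop :=
  is_Gmetric le d /\
  (forall U : set X,
     open U <-> (forall x, U x -> exists r, glt le 0 r /\ Gball le d x r `<=` U)).

Definition in_MG_nat (X : topologicalType) (k : nat) : Prop :=
  exists (G : zmodType) (le : G -> G -> Prop),
    [/\ LOAG le,
        char_eq_nat (@arcbot_le G le) None k
      & exists d : X -> X -> G, Met le d].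

(* Main.v *)
Require Import Defs.
From mathcomp Require Import all_boot all_order all_algebra.
From mathcomp Require Import classical_sets reals topology.
From Stdlib Require Import Classical.
From mathcomp Require Import ring lra.
Set Implicit Arguments.
Unset Strict Implicit.
Import Order.TTheory GRing.Theory Num.Theory.
Local Open Scope ring_scope.

Lemma g_addl (G : zmodType) (le : G -> G -> Prop) (hL : LOAG le) x y z :
  le x y -> le (z + x) (z + y).
Proof. case: hL => _ _ _ _ c h; rewrite ![z + _]addrC; exact: c. Qed.

Lemma g_add2 (G : zmodType) (le : G -> G -> Prop) (hL : LOAG le) x y u v :
  le x y -> le u v -> le (x + u) (y + v).
Proof.
move=> h1 h2; have [_ _ t _ c] := hL.
apply: (t _ (y + u)); first exact: c.
exact: g_addl.
Qed.

Lemma g_muln (G : zmodType) (le : G -> G -> Prop) (hL : LOAG le) x y n :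
  le x y -> le (x *+ n) (y *+ n).
Proof.
move=> h; elim: n => [|n IH]; first by rewrite !mulr0n; case: hL.
rewrite !mulrS; exact: g_add2.
Qed.

Lemma g_pos_muln (G : zmodType) (le : G -> G -> Prop) (hL : LOAG le) x n :
  le 0 x -> le 0 (x *+ n).
Proof. by move=> h; have := g_muln hL n h; rewrite mul0rn. Qed.

Lemma g_mono (G : zmodType) (le : G -> G -> Prop) (hL : LOAG le) x m n :
  le 0 x -> (m <= n)%N -> le (x *+ m) (x *+ n).
Proof.
move=> h mn; rewrite -(subnKC mn) mulrnDr.
have := g_addl hL (x *+ m) (g_pos_muln hL (n - m) h).
by rewrite addr0.
Qed.

Lemma g_antisym_lt (G : zmodType) (le : G -> G -> Prop) (hL : LOAG le) x y :
  glt le x y -> le y x -> False.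
Proof. by case: hL => _ a _ _ _ [h1 h2] h3; apply: h2; apply: a. Qed.

Lemma g_notlt (G : zmodType) (le : G -> G -> Prop) (hL : LOAG le) x y :
  ~ glt le x y -> le y x.
Proof.
have [r _ _ t _] := hL => h.
case: (t x y) => // hxy.
case: (classic (x = y)) => [->|ne]; first exact: r.
by exfalso; apply: h.
Qed.

Lemma g_le_lt (G : zmodType) (le : G -> G -> Prop) (hL : LOAG le) x y z :
  le x y -> glt le y z -> glt le x z.
Proof.
have [_ a t _ _] := hL => h1 [h2 h3]; split; first exact: t h2.
move=> e; subst z; apply: h3; exact: a.
Qed.

Lemma g_lt_le (G : zmodType) (le : G -> G -> Prop) (hL : LOAG le) x y z :
  glt le x y -> le y z -> glt le x z.
Proof.
have [_ a t _ _] := hL => [[h1 h3]] h2; split; first exact: t h2.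
move=> e; subst z; apply: h3; exact: a.
Qed.

Lemma g_pos_S (G : zmodType) (le : G -> G -> Prop) (hL : LOAG le) g n :
  glt le 0 g -> glt le 0 (g *+ n.+1).
Proof.
have [_ a t _ _] := hL => -[h1 h2]; split; first exact: g_pos_muln.
rewrite mulrS => e; apply: h2; apply: a => //.
have := g_addl hL g (g_pos_muln hL n h1); rewrite addr0 -e //.
Qed.

Lemma g_strict (G : zmodType) (le : G -> G -> Prop) (hL : LOAG le) g m n :
  glt le 0 g -> (m < n)%N -> glt le (g *+ m) (g *+ n).
Proof.
move=> hg mn; rewrite -(subnKC (ltnW mn)) mulrnDr.
have: (0 < n - m)%N by rewrite subn_gt0.
case: (n - m)%N => // k _.
have [h1 h2] := g_pos_S hL k hg; split.
  by have := g_addl hL (g *+ m) h1; rewrite addr0.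
move=> e; apply: h2; have : g *+ m + 0 = g *+ m + g *+ k.+1 by rewrite addr0.
by move/addrI.
Qed.

Lemma g_cancel (G : zmodType) (le : G -> G -> Prop) (hL : LOAG le) g m n :
  glt le 0 g -> le (g *+ n) (g *+ m) -> (n <= m)%N.
Proof.
move=> hg h; rewrite leqNgt; apply/negP => mn.
by move: (g_strict hL hg mn) => H; apply: (g_antisym_lt hL H h).
Qed.

Lemma g_class (G : zmodType) (le : G -> G -> Prop) (hL : LOAG le) :
  char_eq_nat (@arcbot_le G le) None 1 ->
  exists a, glt le 0 a /\ forall g, glt le 0 g -> exists N, le a (g *+ N.+1).
Proof.
case=> _ [s [sn [_ sl]]] _.
case E: (s ord0) => [A|]; last by exfalso; exact: (sn ord0).
case: A E => As [a [ha eA]] E; subst As.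
exists a; split => // g hg.
pose B : Arc le := exist _ (arch_class le g) (ex_intro _ g (conj hg erefl)).
have [i hi] := sl (Some B) ltac:(discriminate).
have i0 : i = ord0 by apply: val_inj => /=; case: i {hi} => -[].
move: hi; rewrite i0 E /= => -[x [y [[hx [n [m [n0 [m0 [xa ax]]]]]] [[hy [n' [m' [n0' [m0' [yg gy]]]]]] H]]]].
have [_ _ t _ _] := hL.
have [hx0 _] := hx; have [hy0 _] := hy; have [hg0 _] := hg.
case: H => [H|[n'' [m'' [_ [_ [yx xy]]]]]].
  have [xy _] := H 1%N isT; rewrite mulr1n in xy.
  exists (n' * m)%N.
  apply: (t _ _ _ ax); apply: (t _ _ _ (g_muln hL m xy)).
  apply: (t _ _ _ (g_muln hL m yg)); rewrite -mulrnA.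
  by apply: g_mono => //; rewrite ?mulnA leqnSn.
exists (n' * m'' * m)%N.
apply: (t _ _ _ ax); apply: (t _ _ _ (g_muln hL m xy)).
apply: (t _ _ _ (g_muln hL m (g_muln hL m'' yg))); rewrite -!mulrnA.
by apply: g_mono => //; rewrite ?mulnA leqnSn.
Qed.

Lemma g_dich (G : zmodType) (le : G -> G -> Prop) (hL : LOAG le) :
  (exists m, glt le 0 m /\ forall h, glt le 0 h -> le m h) \/
  (forall g, glt le 0 g -> exists h, glt le 0 h /\ le (h *+ 2) g).
Proof.
have [r a t tot c] := hL.
case: (classic (exists m, glt le 0 m /\ forall h, glt le 0 h -> le m h)) => H; [by left|right].
move=> g hg.
have [h0 [h0p nl]] : exists h0, glt le 0 h0 /\ ~ le g h0.
  apply: NNPP => K; apply: H; exists g; split => // h hh.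
  by apply: NNPP => K'; apply: K; exists h.
have h0g : glt le h0 g by split; [case: (tot g h0)|move=> e; subst; apply: nl; apply: r].
have kp : glt le 0 (g - h0).
  case: h0g => l ne; split; first by have := c _ _ (- h0) l; rewrite subrr.
  by move=> /esym/eqP; rewrite subr_eq0 => /eqP /esym.
case: (tot h0 (g - h0)) => hk.
  exists h0; split => //; rewrite mulr2n.
  by have := g_addl hL h0 hk; rewrite [h0 + (g - h0)]addrC subrK.
exists (g - h0); split => //; rewrite mulr2n.
by have := g_addl hL (g - h0) hk; rewrite subrK.
Qed.

Lemma g_iter (G : zmodType) (le : G -> G -> Prop) (hL : LOAG le) a :
  glt le 0 a ->
  (forall g, glt le 0 g -> exists h, glt le 0 h /\ le (h *+ 2) g) ->
  forall K, exists h, glt le 0 h /\ le (h *+ (2 ^ K)) a.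
Proof.
have [r _ t _ _] := hL => ha H; elim => [|K [h [hp hK]]].
  by exists a; split => //; rewrite expn0 mulr1n.
have [h' [hp' h2]] := H h hp; exists h'; split => //.
rewrite expnS mulrnA; apply: t hK; exact: g_muln.
Qed.

Local Open Scope classical_set_scope.

Definition Sset (G : zmodType) (le : G -> G -> Prop) (a : G) (R : realType) (g : G)
  : set R :=
  [set r | r = 1 \/ exists p q : nat, (0 < q)%N /\ le (g *+ q) (a *+ p) /\
     r = p%:R / q%:R].
Arguments Sset {G} le a R g.

Definition phi (G : zmodType) (le : G -> G -> Prop) (a : G) (R : realType) (g : G)
  : R := inf (Sset le a R g).
Arguments phi {G} le a R g.

Lemma S_ge0 (G : zmodType) (le : G -> G -> Prop) a (R : realType) g (r : R) :
  Sset le a R g r -> 0 <= r.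
Proof. by case=> [->|[p [q [_ [_ ->]]]]] //; apply: divr_ge0. Qed.

Lemma S_ne (G : zmodType) (le : G -> G -> Prop) a (R : realType) g :
  Sset le a R g !=set0.
Proof. by exists 1; left. Qed.

Lemma S_lb (G : zmodType) (le : G -> G -> Prop) a (R : realType) g :
  has_lbound (Sset le a R g).
Proof. by exists 0 => r /S_ge0. Qed.

Lemma phi_le (G : zmodType) (le : G -> G -> Prop) a (R : realType) g (r : R) :
  Sset le a R g r -> phi le a R g <= r.
Proof. by move=> h; apply: (ge_inf (@S_lb _ le a R g)). Qed.

Lemma phi_ge0 (G : zmodType) (le : G -> G -> Prop) a (R : realType) g :
  0 <= phi le a R g.
Proof. by apply: lb_le_inf; [exact: S_ne| move=> r /S_ge0]. Qed.

Lemma phi_lt (G : zmodType) (le : G -> G -> Prop) a (R : realType) g (c : R) :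
  phi le a R g < c -> exists2 r, Sset le a R g r & r < c.
Proof. by apply: inf_lt; exact: S_ne. Qed.

Lemma phi_tri (G : zmodType) (le : G -> G -> Prop) (hL : LOAG le) a (R : realType)
  w g h : le w (g + h) -> phi le a R w <= phi le a R g + phi le a R h.
Proof.
have [_ _ t _ _] := hL => hw.
have key : forall r s, Sset le a R g r -> Sset le a R h s -> phi le a R w <= r + s.
  move=> r s Sr Ss.
  have r0 := S_ge0 Sr; have s0 := S_ge0 Ss.
  case: Sr => [->|[p [q [q0 [hq ->]]]]].
    have := @phi_le _ le a R w 1 (or_introl erefl); move=> H1; apply: (le_trans H1); rewrite ?lerDl ?lerDr // ?divr_ge0 // ?(S_ge0 Ss).
  case: Ss => [->|[p' [q' [q0' [hq' ->]]]]].
    have := @phi_le _ le a R w 1 (or_introl erefl); move=> H1; apply: (le_trans H1); rewrite ?lerDl ?lerDr // ?divr_ge0 // ?(S_ge0 Ss).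
  apply: (@phi_le _ le a R w (p%:R / q%:R + p'%:R / q'%:R)); right; exists (p * q' + p' * q)%N, (q * q')%N; split.
    by rewrite muln_gt0 q0 q0'.
  split.
    apply: (t _ _ _ (g_muln hL (q * q')%N hw)).
    rewrite mulrnDl mulrnDr; apply: g_add2 => //.
      by rewrite !mulrnA; exact: (@g_muln _ _ hL _ _ q' hq).
    by rewrite [(q * q')%N]mulnC !mulrnA; exact: (@g_muln _ _ hL _ _ q hq').
  rewrite natrD !natrM; field.
  by rewrite !pnatr_eq0 -!lt0n q0 q0'.
rewrite leNgt; apply/negP => H.
set e := (phi le a R w - phi le a R g - phi le a R h) / 2.
have e0 : 0 < e by rewrite /e; lra.
have [r Sr hr] := @phi_lt _ le a R g (phi le a R g + e) ltac:(lra).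
have [s Ss hs] := @phi_lt _ le a R h (phi le a R h + e) ltac:(lra).
have := key r s Sr Ss; rewrite /e in hr hs; lra.
Qed.

Lemma phi0 (G : zmodType) (le : G -> G -> Prop) (hL : LOAG le) a (R : realType) :
  phi le a R 0 = 0.
Proof.
apply/eqP; rewrite eq_le phi_ge0 andbT.
have := @phi_le _ le a R 0 0; apply; right; exists 0%N, 1%N; split => //.
by rewrite mulr0n mulr1n mul0r; split => //; case: hL.
Qed.

Lemma phi_pos (G : zmodType) (le : G -> G -> Prop) (hL : LOAG le) a (R : realType) g N :
  glt le 0 g -> le a (g *+ N.+1) -> (N.+1%:R)^-1 <= phi le a R g.
Proof.
have [_ _ t _ _] := hL => hg ha.
apply: lb_le_inf; first exact: S_ne.
move=> r [->|[p [q [q0 [hq ->]]]]]; first by rewrite invf_le1 // ler1n.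
have : (q <= N.+1 * p)%N.
  apply: (g_cancel hL hg); apply: (t _ _ _ hq).
  by rewrite mulrnA; exact: (@g_muln _ _ hL _ _ p ha).
rewrite -(ler_nat R) natrM => hqp.
have q0' : 0 < q%:R :> R by rewrite ltr0n.
by rewrite ler_pdivlMr // mulrC ler_pdivrMr ?ltr0n // mulrC.
Qed.

Lemma phi_small_lt (G : zmodType) (le : G -> G -> Prop) (hL : LOAG le) a (R : realType)
  g w N : glt le 0 g -> le a (g *+ N.+1) ->
  phi le a R w < (N.+1%:R)^-1 -> glt le w g.
Proof.
have [_ _ t _ _] := hL => hg ha /phi_lt [r [->|[p [q [q0 [hq ->]]]]]].
  rewrite invf_gt1 // => h; exfalso; have : (1 : R) <= N.+1%:R by rewrite ler1n.
  lra.
have q0' : 0 < q%:R :> R by rewrite ltr0n.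
rewrite ltr_pdivrMr // mulrC ltr_pdivlMr ?ltr0n // -natrM ltr_nat mulnC => pq.
apply: NNPP => nwg; have gw := g_notlt hL nwg.
have h1 : le (g *+ q) (g *+ (N.+1 * p)).
  apply: (t _ _ _ (@g_muln _ _ hL _ _ q gw)); apply: (t _ _ _ hq).
  by rewrite mulrnA; exact: (@g_muln _ _ hL _ _ p ha).
by apply: (g_antisym_lt hL (g_strict hL hg pq) h1).
Qed.

Lemma phi_small (G : zmodType) (le : G -> G -> Prop) (hL : LOAG le) a (R : realType) w n :
  (0 < n)%N -> le (w *+ n) a -> phi le a R w <= (n%:R)^-1.
Proof.
move=> n0 h; rewrite -div1r; apply: phi_le; right; exists 1%N, n; split => //; split => //.
Qed.

Theorem proposition2p45 (X : topologicalType) :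
  in_MG_nat X 1 ->
  forall R : realType, exists d : X -> X -> R, Met (fun a b : R => (a <= b)%R) d.
Proof.
move=> [G [le [hL hc [d [[d0 dpos dsym dtri] dtop]]]]] R.
have [a [ha hA]] := g_class hL hc.
have [_ _ t _ _] := hL.
exists (fun x y => phi le a R (d x y)).
split.
  split.
  - move=> x y; split => [h|->]; last by rewrite (proj2 (d0 y y) erefl) (phi0 hL).
    apply: NNPP => nxy.
    have dp : glt le 0 (d x y) by split => // /esym /d0.
    have [N HN] := hA _ dp.
    have := phi_pos hL R dp HN; rewrite h => H.
    have : 0 < (N.+1%:R : R)^-1 by rewrite invr_gt0 ltr0n.
    by rewrite ltNge H.
  - move=> x y; exact: phi_ge0.
  - by move=> x y; rewrite dsym.
  - move=> x y z; exact: (@phi_tri _ le hL a R _ _ _ (dtri x y z)).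
move=> U; rewrite dtop; split => H x Ux; have [r [r0 sub]] := H x Ux.
- have [N HN] := hA _ r0.
  have iN : 0 < (N.+1%:R : R)^-1 by rewrite invr_gt0 ltr0n.
  exists (N.+1%:R)^-1; split.
    split; first by rewrite ltW.
    by move=> e; move: iN; rewrite -e ltxx.
  move=> y [hy ne]; apply: sub; apply: (@phi_small_lt _ le hL a R _ _ N r0 HN).
  by rewrite lt_neqAle hy andbT; apply/eqP.
- have rp : 0 < r by case: r0 => r0 ne; rewrite lt_neqAle r0 andbT; apply/eqP.
  case: (g_dich hL) => [[m [mp mmin]]|Hh].
    exists m; split => // y hy.
    have dz : d x y = 0.
      apply: NNPP => nz.
      have dp : glt le 0 (d x y) by split => // /esym.
      by apply: (g_antisym_lt hL hy (mmin _ dp)).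
    by move/d0: dz => <-.
  pose K := Num.Def.archi_bound (r^-1).
  have [h [hp hK]] := g_iter hL ha Hh K.
  exists h; split => // y hy; apply: sub.
  have hle : le (d x y *+ 2 ^ K) a.
    by apply: (t _ _ _ _ hK); case: hy => hy _; exact: (@g_muln _ _ hL _ _ _ hy).
  have H1 := @phi_small _ le hL a R _ _ (expn_gt0 2 K) hle.
  have H2 : r^-1 < K%:R by apply: archi_boundP; rewrite invr_ge0 ltW.
  have H3 : (K%:R : R) < (2 ^ K)%:R by rewrite ltr_nat ltn_expl.
  have M0 : (0 : R) < (2 ^ K)%:R by rewrite ltr0n expn_gt0.
  have H4 : ((2 ^ K)%:R : R)^-1 < r.
    rewrite -div1r ltr_pdivrMr //.
    have : r^-1 < (2 ^ K)%:R by apply: lt_trans H3.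
    by rewrite -div1r ltr_pdivrMr // mulrC.
  have H5 : phi le a R (d x y) < r by apply: le_lt_trans H4.
  split; first exact: ltW.
  by move=> e; move: H5; rewrite e ltxx.
Qed.
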